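(* In the setting described in the context (with $L=[0,1]$), let $q\in\{1,\dots,n\}$ and assume there exists $A\subseteq\mathcal C$ with $|A|=q$ and $\eta_q(A)=1$. Define $\mu^*:2^{\mathcal C}\to[0,1]$ by $\mu^*(\emptyset)=0$, $\mu^*(X)=\eta_q(X)$ if $0<|X|\le q$, and $\mu^*(X)=\max_{\emptyset\neq Y\subsetneq X,\ |Y|\le q}\eta_q(Y)$ if $|X|>q$. Then $\mu^*$ is a $q$-maxitive capacity and $\max_{1\le k\le N}|S_{\mu^*}(x^{(k)})-\alpha^{(k)}|=\Delta_q$.
   Context: Let $\mathcal C=\{1,\dots,n\}$ and $L=[0,1]$. A capacity is a map $\mu:2^{\mathcal C}\to[0,1]$ with $\mu(\emptyset)=0$, $\mu(\mathcal C)=1$, monotone for inclusion; it is $q$-maxitive if for all $X$ with $|X|>q$, $\mu(X)=\max_{Y\subsetneq X,\ |Y|\le q}\mu(Y)$. Sugeno integral: $S_\mu(x)=\max_{A\subseteq\mathcal C}\min(\min_{i\in A}x_i,\mu(A))$ with $\min_{i\in\emptyset}x_i=1$. Training data: $N$ pairs $(x^{(k)},\alpha^{(k)})$, $x^{(k)}\in[0,1]^n$, $\alpha^{(k)}\in[0,1]$. For nonempty $A$, $m_{k,A}=\min_{i\in A}x^{(k)}_i$. Write $t^+=\max(t,0)$. For $1\le i\le N$ and $0<|A|\le q$, let $\sigma_G(\alpha^{(i)},m_{l,A},\alpha^{(l)})=\min\big(\tfrac{(\alpha^{(i)}-\alpha^{(l)})^+}{2},(m_{l,A}-\alpha^{(l)})^+\big)$,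 $\delta_{i,A}=\max\big((\alpha^{(i)}-m_{i,A})^+,\max_{1\le l\le N}\sigma_G(\alpha^{(i)},m_{l,A},\alpha^{(l)})\big)$, $\delta_i=\min_{0<|A|\le q}\delta_{i,A}$, and $\Delta_q=\max_{1\le i\le N}\delta_i$. For $0<|A|\le q$, $\eta_q(A)=\min_{1\le k\le N}\big(m_{k,A}\to_G\min(\alpha^{(k)}+\Delta_q,1)\big)$, where $a\to_G b=1$ if $a\le b$ and $a\to_G b=b$ otherwise. *)

(* Defs.v *)
From mathcomp Require Import all_boot all_order all_algebra.
Set Implicit Arguments. Unset Strict Implicit. Unset Printing Implicit Defensive.
Import Order.TTheory GRing.Theory Num.Theory.
Local Open Scope ring_scope.

Section Defs.
Variable R : realFieldType.
Variable n : nat.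

Definition pospart (t : R) : R := Num.max t 0.

Definition implG (a b : R) : R := if a <= b then 1 else b.

Definition minA (v : 'I_n -> R) (A : {set 'I_n}) : R :=
  \big[Num.min/1]_(i in A) v i.

Definition capacity (mu : {set 'I_n} -> R) : Prop :=
  [/\ mu set0 = 0, mu setT = 1,
      (forall X, 0 <= mu X <= 1) &
      (forall X Y : {set 'I_n}, X \subset Y -> mu X <= mu Y)].

(* q-maxitivity: for |X| > q, mu X = max over Y proper subset of X, |Y| <= q
   (the family always contains set0, so mu set0 is a neutral base value) *)
Definition q_maxitive (q : nat) (mu : {set 'I_n} -> R) : Prop :=
  forall X : {set 'I_n}, (q < #|X|)%N ->
    mu X = \big[Num.max/mu set0]_(Y : {set 'I_n} | (Y \proper X) && (#|Y| <= q)%N) mu Y.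

(* Sugeno integral; empty min = 1; the term for A = set0 is 0 so base 0 is exact *)
Definition sugeno (mu : {set 'I_n} -> R) (v : 'I_n -> R) : R :=
  \big[Num.max/0]_(A : {set 'I_n}) Num.min (minA v A) (mu A).

Variable N : nat.
Variable x : 'I_N -> 'I_n -> R.
Variable alpha : 'I_N -> R.
Variable q : nat.

Definition mkA (k : 'I_N) (A : {set 'I_n}) : R := minA (x k) A.

Definition sigmaG (ai ml al : R) : R :=
  Num.min (pospart (ai - al) / 2) (pospart (ml - al)).

Definition deltaiA (i : 'I_N) (A : {set 'I_n}) : R :=
  Num.max (pospart (alpha i - mkA i A))
          (\big[Num.max/0]_(l : 'I_N) sigmaG (alpha i) (mkA l A) (alpha l)).

(* min over 0 < |A| <= q; all delta_{i,A} lie in [0,1], so base 1 is harmless *)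
Definition deltai (i : 'I_N) : R :=
  \big[Num.min/1]_(A : {set 'I_n} | (0 < #|A| <= q)%N) deltaiA i A.

(* max over 1 <= i <= N; all delta_i >= 0, so base 0 is harmless *)
Definition Deltaq : R := \big[Num.max/0]_(i : 'I_N) deltai i.

Definition etaq (A : {set 'I_n}) : R :=
  \big[Num.min/1]_(k : 'I_N) implG (mkA k A) (Num.min (alpha k + Deltaq) 1).

Definition mustar (X : {set 'I_n}) : R :=
  if X == set0 then 0
  else if (#|X| <= q)%N then etaq X
  else \big[Num.max/0]_(Y : {set 'I_n} | [&& Y != set0, Y \proper X & (#|Y| <= q)%N])
         etaq Y.

End Defs.

(* Main.v *)
Require Import Defs.
From mathcomp Require Import all_boot all_order all_algebra.
From mathcomp Require Import lra.
Import Order.TTheory GRing.Theory Num.Theory.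
Local Open Scope ring_scope.

Lemma bigmax_gt_ex (R : realFieldType) (I : finType) (P : pred I) (F : I -> R) x0 c :
  c < \big[Num.max/x0]_(i | P i) F i -> c < x0 \/ exists i, P i /\ c < F i.
Proof.
move=> H; case: (ltP c x0) => Hx; first by left.
right; have [/existsP [i /andP[Pi Fi]]|/existsPn Hn] := boolP [exists i, P i && (c < F i)].
  by exists i.
exfalso; suff : \big[Num.max/x0]_(i | P i) F i <= c by rewrite leNgt H.
apply: bigmax_le => // i Pi; move: (Hn i); rewrite negb_and Pi /= -leNgt; done.
Qed.

Section Proof3.
Set Implicit Arguments.
Variable R : realFieldType.
Variables n N : nat.
Variable x : 'I_N -> 'I_n -> R.
Variable alpha : 'I_N -> R.
Variable q : nat.
Hypothesis hx : forall k i, 0 <= x k i <= 1.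
Hypothesis ha : forall k, 0 <= alpha k <= 1.

Local Notation D := (Deltaq x alpha q).
Local Notation eta := (etaq x alpha q).
Local Notation mu := (mustar x alpha q).
Local Notation m := (mkA x).

Lemma m_ge0 k A : 0 <= m k A.
Proof. apply: le_bigmin => // i _; by case/andP: (hx k i). Qed.

Lemma m_le1 k A : m k A <= 1.
Proof. exact: bigmin_le_id. Qed.

Lemma m_anti k (A B : {set 'I_n}) : A \subset B -> m k B <= m k A.
Proof.
move=> AB; apply: le_bigmin; first exact: m_le1.
by move=> i iA; apply: bigmin_le_cond; apply: (subsetP AB).
Qed.

Lemma D_ge0 : 0 <= D.
Proof. exact: bigmax_ge_id. Qed.

Lemma b_ge0 k : 0 <= Num.min (alpha k + D) 1.
Proof. rewrite le_min ler01 andbT; have := D_ge0; case/andP: (ha k) => ? _; lra. Qed.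

Lemma eta_le1 A : eta A <= 1.
Proof. exact: bigmin_le_id. Qed.

Lemma eta_ge0 A : 0 <= eta A.
Proof.
apply: le_bigmin => // k _; rewrite /implG; case: ifP => _ //; exact: b_ge0.
Qed.

Lemma eta_mono (A B : {set 'I_n}) : A \subset B -> eta A <= eta B.
Proof.
move=> AB; apply: le_bigmin; first exact: eta_le1.
move=> k _; apply: le_trans (bigmin_le _ k _) _ => /=.
have hm := m_anti k AB; rewrite /implG.
case: ifP => h1; case: ifP => h2 //.
- by rewrite (le_trans hm h1) in h2.
- by rewrite ge_min lexx orbT.
Qed.

Lemma eta_bound k A : Num.min (m k A) (eta A) <= alpha k + D.
Proof.
have H : eta A <= implG (m k A) (Num.min (alpha k + D) 1) by exact: bigmin_le.
have hb : Num.min (alpha k + D) 1 <= alpha k + D by rewrite ge_min lexx.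
move: H; rewrite /implG; case: ifP => h1 H.
  by rewrite ge_min (le_trans h1 hb).
by rewrite ge_min (le_trans H hb) orbT.
Qed.

Lemma mu_small (X : {set 'I_n}) : X != set0 -> (#|X| <= q)%N -> mu X = eta X.
Proof. by move=> /negbTE h1 h2; rewrite /mustar h1 h2. Qed.

Lemma mu_big (X : {set 'I_n}) : (q < #|X|)%N ->
  mu X = \big[Num.max/0]_(Y : {set 'I_n} | [&& Y != set0, Y \proper X & (#|Y| <= q)%N]) eta Y.
Proof.
move=> h; have : X != set0 by rewrite -card_gt0 (leq_ltn_trans _ h).
by move=> /negbTE h1; rewrite /mustar h1 leqNgt h.
Qed.

Lemma mu_ge0 (X : {set 'I_n}) : 0 <= mu X.
Proof.
rewrite /mustar; case: ifP => // _; case: ifP => _; first exact: eta_ge0.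
exact: bigmax_ge_id.
Qed.

Lemma mu_le1 (X : {set 'I_n}) : mu X <= 1.
Proof.
rewrite /mustar; case: ifP => _; first exact: ler01. case: ifP => _; first exact: eta_le1.
by apply: bigmax_le => [|Y _]; [exact: ler01 | exact: eta_le1].
Qed.

Lemma L1 k (X : {set 'I_n}) : Num.min (m k X) (mu X) <= alpha k + D.
Proof.
have hc : 0 <= alpha k + D by have := D_ge0; case/andP: (ha k) => ? _; lra.
have [->|Xn0] := eqVneq X set0.
  by rewrite /mustar eqxx ge_min hc orbT.
case: (leqP #|X| q) => hX; first by rewrite mu_small // eta_bound.
rewrite leNgt; apply/negP => H.
move: H; rewrite lt_min => /andP[Hm]; rewrite mu_big // => /bigmax_gt_ex [|[Y [/and3P[_ /properP [YX _] _] HY]]].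
  by rewrite ltNge hc.
have := eta_bound k Y; rewrite leNgt lt_min HY andbT.
by rewrite (lt_le_trans Hm (m_anti k YX)).
Qed.

Definition S k := sugeno mu (x k).

Lemma S_ge0 k : 0 <= S k.
Proof. exact: bigmax_ge_id. Qed.

Lemma S_le k : S k <= alpha k + D.
Proof.
apply: bigmax_le => [|X _]; last exact: L1.
have := D_ge0; case/andP: (ha k) => ? _; lra.
Qed.

Lemma L3 k (Y : {set 'I_n}) : Y != set0 -> (#|Y| <= q)%N -> Num.min (m k Y) (eta Y) <= S k.
Proof.
move=> h1 h2; rewrite -mu_small //.
rewrite /S /sugeno /mkA; exact: le_bigmax.
Qed.

Lemma L2 k c : c < S k -> c < 0 \/
  exists Y, [&& Y != set0 & (#|Y| <= q)%N] /\ c < m k Y /\ c < eta Y.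
Proof.
move=> /bigmax_gt_ex [|[X [_]]]; first by left.
rewrite lt_min => /andP[Hm Hmu].
have [X0|Xn0] := eqVneq X set0.
  by left; move: Hmu; rewrite X0 /mustar eqxx.
case: (leqP #|X| q) => hX.
  by right; exists X; rewrite Xn0 hX -mu_small.
move: Hmu; rewrite mu_big // => /bigmax_gt_ex [|[Y [/and3P[Yn0 /properP [YX _] hY] HY]]].
  by left.
right; exists Y; rewrite Yn0 hY; split => //; split => //.
exact: (lt_le_trans Hm (m_anti k YX)).
Qed.

Lemma upper k : `|S k - alpha k| <= D.
Proof.
rewrite ler_norml; apply/andP; split; last by have := S_le k; lra.
case: (leP (alpha k) D) => hD.
  by have := S_ge0 k; lra.
have hdk : deltai x alpha q k <= D by exact: (le_bigmax _ (deltai x alpha q) k).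
have [/existsP [A /andP[hA hdA]]|/existsPn Hn] :=
  boolP [exists A : {set 'I_n}, (0 < #|A| <= q)%N && (deltaiA x alpha k A <= D)]; last first.
  exfalso; suff : D < deltai x alpha q k by rewrite ltNge hdk.
  apply: lt_bigmin; first by case/andP: (ha k) => _ ?; lra.
  by move=> A hA; move: (Hn A); rewrite hA /= -ltNge.
move: hdA; rewrite /deltaiA ge_max => /andP[hp hs].
move: hp; rewrite /pospart ge_max => /andP[hp _].
case/andP: hA; rewrite card_gt0 => An0 hAq.
suff : alpha k - D <= S k by lra.
apply: le_trans (L3 k A An0 hAq); rewrite le_min; apply/andP; split; first lra.
apply: le_bigmin; first by case/andP: (ha k) => _ ?; have := D_ge0; lra.
move=> l _; rewrite /implG; case: ifP => h1.
  by case/andP: (ha k) => _ ?; have := D_ge0; lra.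
have hsl : sigmaG (alpha k) (m l A) (alpha l) <= D.
  by apply: le_trans hs; exact: (le_bigmax _ (fun l => sigmaG (alpha k) (m l A) (alpha l)) l).
have hml := m_le1 l A.
move/negbT: h1; rewrite -ltNge gt_min => /orP[h1|h1]; last by exfalso; move: h1; rewrite ltNge hml.
move: hsl; rewrite /sigmaG /pospart.
case/andP: (ha k) => ? ?; case/andP: (ha l) => ? ?; have := D_ge0 => ?.
rewrite le_min ge_min => /orP[h2|].
  have h3 : alpha k - alpha l <= Num.max (alpha k - alpha l) 0 by rewrite le_max lexx.
  apply/andP; split; lra.
rewrite ge_max => /andP[h2 h3]; apply/andP; split; lra.
Qed.

Lemma Dbig k : deltai x alpha q k <= D.
Proof. exact: (le_bigmax _ (deltai x alpha q) k). Qed.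

Lemma lower (A0 : {set 'I_n}) : A0 != set0 -> (#|A0| <= q)%N ->
  D <= \big[Num.max/0]_(k : 'I_N) `|S k - alpha k|.
Proof.
move=> A0n0 A0q.
case: (leP D 0) => hD0; first by apply: le_trans hD0 _; exact: bigmax_ge_id.
have [/existsP [i hi]|/existsPn Hn] := boolP [exists i, D <= deltai x alpha q i]; last first.
  exfalso; suff : D < D by rewrite ltxx.
  rewrite [X in X < _]/Deltaq; apply: bigmax_lt => // i _; by move: (Hn i); rewrite -ltNge.
have hY : forall Y : {set 'I_n}, Y != set0 -> (#|Y| <= q)%N -> D <= deltaiA x alpha i Y.
  move=> Y h1 h2; apply: le_trans hi _; apply: bigmin_le_cond; by rewrite card_gt0 h1 h2.
case: (leP (S i) (alpha i - D)) => hS.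
  apply: (bigmax_sup i) => //; rewrite ler_normr; apply/orP; right; lra.
have [Y [/andP[Yn0 Yq] [hm he]]] : exists Y, [&& Y != set0 & (#|Y| <= q)%N] /\
    alpha i - D < m i Y /\ alpha i - D < eta Y.
  case: (L2 _ _ hS) => // hc; exists A0; rewrite A0n0 A0q; split => //.
  by split; apply: lt_le_trans hc _; [exact: m_ge0 | exact: eta_ge0].
move: (hY Y Yn0 Yq); rewrite /deltaiA le_max => /orP[|].
  rewrite /pospart le_max => /orP[|]; [lra | by rewrite leNgt hD0].
move=> hsig.
have [/existsP [l hl]|/existsPn Hn] := boolP [exists l, D <= sigmaG (alpha i) (m l Y) (alpha l)]; last first.
  exfalso; suff : D < D by rewrite ltxx.
  apply: (le_lt_trans hsig); apply: bigmax_lt => // l _; by move: (Hn l); rewrite -ltNge.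
move: hl; rewrite /sigmaG le_min /pospart !le_max => /andP[h1 h2].
have h1' : 2 * D <= alpha i - alpha l.
  move: h1; rewrite maxEle; case: ifPn => [hh|]; [|rewrite -ltNge => hh]; move=> h1; lra.
have h2' : D <= m l Y - alpha l.
  move: h2 => /orP[//|h]; by rewrite leNgt hD0 in h.
apply: (bigmax_sup l) => //; rewrite ler_normr; apply/orP; left.
have := L3 l Y Yn0 Yq.
have : alpha l + D <= Num.min (m l Y) (eta Y) by rewrite le_min; apply/andP; split; lra.
move=> ha1 ha2; lra.
Qed.

End Proof3.

Theorem proposition3 (R : realFieldType) (n N : nat)
  (x : 'I_N -> 'I_n -> R) (alpha : 'I_N -> R) (q : nat) :
  (forall k i, 0 <= x k i <= 1) ->
  (forall k, 0 <= alpha k <= 1) ->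
  (1 <= q <= n)%N ->
  (exists A : {set 'I_n}, #|A| = q /\ etaq x alpha q A = 1) ->
  capacity (mustar x alpha q) /\ q_maxitive q (mustar x alpha q) /\
  \big[Num.max/0]_(k : 'I_N) `|sugeno (mustar x alpha q) (x k) - alpha k|
    = Deltaq x alpha q.
Proof.
move=> hx ha /andP[q1 qn] [A [hA etaA]].
have An0 : A != set0 by rewrite -card_gt0 hA.
have Aq : (#|A| <= q)%N by rewrite hA.
have Mge0 := mu_ge0 R x alpha q ha.
have Mle1 := mu_le1 R x alpha q.
have Msmall := mu_small R x alpha q.
have Mbig := mu_big R x alpha q.
have Emono := eta_mono R x alpha q.
have Ele1 := eta_le1 R x alpha q.
have Dge0 := D_ge0 R x alpha q.
have Up := upper R x alpha q ha.
have Lo := lower R x alpha q hx ha A An0 Aq.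
split; last split.
- split.
  + by rewrite /mustar eqxx.
  + have Tn0 : [set: 'I_n] != set0 by rewrite -card_gt0 cardsT card_ord (leq_trans q1 qn).
    case: (leqP n q) => hnq.
      rewrite Msmall ?cardsT ?card_ord //.
      have -> : [set: 'I_n] = A; last by [].
      by apply/eqP; rewrite eq_sym eqEcard subsetT cardsT card_ord hA.
    rewrite Mbig ?cardsT ?card_ord //; apply: le_anti; apply/andP; split.
      by apply: bigmax_le => [|Y _]; [exact: ler01 | exact: Ele1].
    apply: (bigmax_sup A); last by rewrite etaA.
    rewrite An0 Aq properT andbT; apply/negP => /eqP hT.
    by move: hA; rewrite hT cardsT card_ord => hh; rewrite hh ltnn in hnq.
  + by move=> X; rewrite Mge0 Mle1.
  + move=> X Y XY.
    have [->|Xn0] := eqVneq X set0; first by rewrite /mustar eqxx Mge0.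
    have Yn0 : Y != set0.
      by apply/negP => /eqP Y0; move: XY; rewrite Y0 subset0 (negbTE Xn0).
    have cXY := subset_leq_card XY.
    case: (leqP #|X| q) => hX; case: (leqP #|Y| q) => hY.
    * by rewrite !Msmall //; exact: Emono.
    * rewrite Msmall // Mbig //; apply: (bigmax_sup X) => //.
      by rewrite Xn0 hX properEcard XY (leq_ltn_trans hX hY).
    * by move: (leq_ltn_trans hY hX); rewrite ltnNge cXY.
    * rewrite !Mbig //; apply: bigmax_le; first exact: bigmax_ge_id.
      move=> Z /and3P[Zn0 ZX Zq]; apply: (bigmax_sup Z) => //.
      by rewrite Zn0 Zq (proper_sub_trans ZX XY).
- move=> X hX; rewrite Mbig //; have -> : mustar x alpha q set0 = 0 by rewrite /mustar eqxx.
  have LX : 0 <= \big[Num.max/0]_(Y : {set 'I_n} | [&& Y != set0, Y \proper X & (#|Y| <= q)%N]) etaq x alpha q Y by exact: bigmax_ge_id.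
  apply: le_anti; apply/andP; split.
    apply: bigmax_le; first exact: bigmax_ge_id.
    move=> Y /and3P[Yn0 YX Yq]; apply: (bigmax_sup Y); first by rewrite YX Yq.
    by rewrite Msmall.
  apply: bigmax_le => // Y /andP[YX Yq].
  have [->|Yn0] := eqVneq Y set0; first by rewrite /mustar eqxx.
  rewrite Msmall //; apply: (bigmax_sup Y) => //; by rewrite Yn0 YX Yq.
- apply: le_anti; apply/andP; split.
    apply: bigmax_le; first exact: Dge0.
    move=> k _; exact: Up.
  exact: Lo.
Qed.
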